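(* Let $\alpha,\beta>0$, $\mathbf{c}=(c_j)_{j\in\mathbb{Z}}\in L^\infty(\mathbb{R}_+,\ell^\infty(\mathbb{Z}))$ and $\zeta,\xi:\mathbb{R}_+\to\mathbb{R}$ continuous. Let $W_j,Q_j\in\mathscr{C}^1([0,+\infty),\mathbb{R})$ ($j\in\mathbb{Z}$) satisfy, for all $t>0$ and integers $\zeta(t)\le j\le\xi(t)$, $$W_j'(t)\ge-2\alpha W_j(t)+\beta(Q_j(t)+Q_{j+1}(t)),\qquad Q_j'(t)\ge c_j(t)Q_j(t)+\alpha(W_j(t)+W_{j-1}(t)).$$ Assume $W_j(0)\ge0$, $Q_j(0)\ge0$ for all integers $\zeta(0)-1\le j\le\xi(0)+1$, and $W_j(t)\ge0$, $Q_j(t)\ge0$ for all $t>0$ and integers $j\in[\zeta(t)-1,\zeta(t))\cup(\xi(t),\xi(t)+1]$. Then $W_j(t)\ge0$ and $Q_j(t)\ge0$ for all $t>0$ and integers $\zeta(t)\le j\le\xi(t)$. *)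

(* Defs.v *)
From HB Require Import structures.
From mathcomp Require Import all_boot all_order all_algebra.
From mathcomp Require Import all_classical all_reals all_analysis.
Set Implicit Arguments. Unset Strict Implicit. Unset Printing Implicit Defensive.
Import Order.TTheory GRing.Theory Num.Theory.
Import numFieldNormedType.Exports.
Local Open Scope classical_set_scope.
Local Open Scope ring_scope.

(* f : R -> R is C^1 on [0,+oo): differentiable at every t > 0, with a
   right derivative at 0, the resulting derivative being continuous on
   [0,+oo).  Values of f at negative arguments are irrelevant. *)
Definition C1_Rplus {R : realType} (f : R -> R) : Prop :=
  exists f' : R -> R,
    (forall t : R, 0 < t -> is_derive t 1 f (f' t)) /\
    ((fun h : R => h^-1 * (f h - f 0)) @ (0 : R)^'+ --> f' 0) /\
    {within [set x : R | 0 <= x], continuous f'}.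

(* c = (c_j)_{j in Z} belongs to L^oo(R_+, l^oo(Z)): each component is
   Lebesgue measurable on R_+ and sup_j |c_j(t)| is essentially bounded
   on R_+. *)
Definition Linf_linf {R : realType} (c : int -> R -> R) : Prop :=
  (forall j : int, measurable_fun [set x : R | 0 <= x] (c j)) /\
  exists M : R,
    {ae (@lebesgue_measure R), forall t : R, 0 <= t ->
        forall j : int, `|c j t| <= M}.

(* Main.v *)
Require Import Defs.
From HB Require Import structures.
From mathcomp Require Import all_boot all_order all_algebra.
From mathcomp Require Import all_classical all_reals all_analysis.
Import Order.TTheory GRing.Theory Num.Theory.
Import numFieldNormedType.Exports.
Local Open Scope classical_set_scope.
Local Open Scope ring_scope.
From mathcomp Require Import measurable_realfun.
From mathcomp Require Import zify ring lra.
Set Implicit Arguments. Unset Strict Implicit. Unset Printing Implicit Defensive.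

Lemma ae_dense (R : realType) (P : R -> Prop) (t0 : R) :
  {ae (@lebesgue_measure R), forall t, P t} -> (\forall s \near t0, ~ P s) -> False.
Proof.
move=> [A [mA A0 sub]] /nbhs_ballP [e /= e0 be].
have : (lebesgue_measure (ball t0 e) <= lebesgue_measure A)%E.
  apply: le_measure; rewrite ?inE //; first exact: measurable_ball.
  move=> x /be nP; apply: sub => /=; exact: nP.
rewrite A0 lebesgue_measure_ball; last exact: ltW.
rewrite lee_fin => h2.
have h1 : 0 < e *+ 2 by rewrite mulrn_wgt0.
by have := lt_le_trans h1 h2; rewrite ltxx.
Qed.


Lemma near_forall_int (R : realType) {T : Type} (F : set_system T) {FF : Filter F}
  (a b : R) (P : int -> T -> Prop) :
  (forall j : int, a < j%:~R < b -> \forall x \near F, P j x) ->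
  \forall x \near F, forall j : int, a < j%:~R < b -> P j x.
Proof.
move=> H.
set m := Num.floor a.
have key : forall n : nat, \forall x \near F, forall j : int,
    a < j%:~R < b -> (j <= m + n%:Z)%R -> P j x.
  elim=> [|n IH].
    apply: nearW => x j /andP[aj _] jm.
    by move: aj; rewrite -floor_lt_int -/m => mj; lia.
  have [hab|hab] := pselect (a < (m + n.+1%:Z)%:~R < b).
    apply: filterS2 IH (H _ hab) => x IHx Px j jab jm.
    have [jle|jgt] := leP j (m + n%:Z); first exact: IHx.
    have -> : j = m + n.+1%:Z by lia.
    exact: Px.
  apply: filterS IH => x IHx j jab jm.
  have [jle|jgt] := leP j (m + n%:Z); first exact: IHx.
  have ej : j = m + n.+1%:Z by lia.
  by rewrite ej in jab; exfalso; apply: hab.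
apply: filterS (key `|Num.floor b - m|%N) => x Hx j jab.
apply: Hx => //.
have : j <= Num.floor b by rewrite floor_ge_int; case/andP: jab => _ /ltW.
lia.
Qed.

Lemma left_deriv (R : realType) (f : R -> R) (t l : R) :
  is_derive t 1 f l -> (\forall s \near t^'-, f t < f s) -> l <= 0.
Proof.
move=> [df dv] H; rewrite leNgt; apply/negP => l0.
have cv : (fun h => h^-1 *: ((f \o shift t) (h *: 1) - f t)) @ 0^' --> l.
  by rewrite -dv; exact: df.
have G1 : \forall h \near 0^', 0 < h^-1 *: ((f \o shift t) (h *: 1) - f t).
  exact: cvgr_gt _ cv _ l0.
move: G1; rewrite near_withinE => /nbhs_ballP[e1 /= e1p B1].
move: H; rewrite near_withinE => /nbhs_ballP[e2 /= e2p B2].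
set h := - (Num.min e1 e2 / 2).
have mp : 0 < Num.min e1 e2 by rewrite lt_min e1p e2p.
have hn : h < 0 by rewrite /h oppr_lt0 divr_gt0.
have hb1 : ball 0 e1 h.
  rewrite /ball /= sub0r normrN /h normrN gtr0_norm ?divr_gt0 //.
  apply: (@lt_le_trans _ _ (Num.min e1 e2)); last by rewrite ge_min lexx.
  by rewrite ltr_pdivrMr // ltr_pMr // ltr1n.
have hb2 : ball t e2 (h + t).
  rewrite /ball /= opprD addrA addrAC subrr sub0r /h opprK gtr0_norm ?divr_gt0 //.
  apply: (@lt_le_trans _ _ (Num.min e1 e2)); last by rewrite ge_min lexx orbT.
  by rewrite ltr_pdivrMr // ltr_pMr // ltr1n.
have g0 := B1 _ hb1 (ltr0_neq0 hn).
have q := B2 _ hb2.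
have hlt : h + t < t by rewrite -ltrBrDr subrr.
have {}q := q hlt.
have : h^-1 * (f (h + t) - f t) < 0.
  by rewrite nmulr_rlt0 ?invr_lt0 // subr_gt0.
move: g0; rewrite /= scaler1 => g0.
by rewrite ltNge ltW.
Qed.

Lemma right_cont0 (R : realType) (f : R -> R) (L : R) :
  (fun h => h^-1 * (f h - f 0)) @ (0:R)^'+ --> L -> f @ (0:R)^'+ --> f 0.
Proof.
move=> cq.
have e : \forall h \near (0:R)^'+, f 0 + h * (h^-1 * (f h - f 0)) = f h.
  near=> h; rewrite mulrA divff ?mul1r; last first.
    apply: lt0r_neq0; near: h; exact: nbhs_right_gt.
  by rewrite addrC subrK.
apply: (cvg_trans (near_eq_cvg e)).
have H : (fun h => f 0 + h * (h^-1 * (f h - f 0))) @ (0:R)^'+ --> f 0 + 0 * L.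
  apply: cvgD; first exact: cvg_cst.
  apply: cvgM => //; exact: cvg_at_right_filter cvg_id.
by rewrite mul0r addr0 in H.
Unshelve. all: by end_near. Qed.

Lemma within_to_at (R : realType) (g : R -> R) t :
  {within [set x : R | 0 <= x], continuous g} -> 0 < t -> {for t, continuous g}.
Proof.
move=> cg t0.
have : {within [set x : R | 0 < x], continuous g}.
  by apply: continuous_subspaceW cg => x /= /ltW.
rewrite continuous_open_subspace; last exact: open_gt.
by move=> /(_ t); apply; rewrite inE.
Qed.

Lemma is_derive_cont (R : realType) (f : R -> R) (t d : R) :
  is_derive t 1 f d -> {for t, continuous f}.
Proof.
move=> [df _]; exact/differentiable_continuous/derivable1_diffP.
Qed.

Lemma is_derive_p (R : realType) (e K t : R) :
  is_derive t 1 (fun s => e * expR (K * s)) (K * (e * expR (K * t))).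
Proof.
have h0 : is_derive t 1 (K \*: (@id R)) (K *: 1).
  exact: is_deriveZ.
have h1 : is_derive t 1 (fun s : R => K * s) K.
  have -> : (fun s : R => K * s) = K \*: (@id R) by apply: funext.
  by rewrite -[X in is_derive _ _ _ X](mulr1 K); exact: h0.
have h2 : is_derive t 1 (expR \o (fun s : R => K * s)) (expR (K * t) * K).
  exact: is_derive1_comp.
have h3 : is_derive t 1 (e \*: (expR \o (fun s : R => K * s))) (e *: (expR (K * t) * K)).
  exact: is_deriveZ.
have -> : (fun s : R => e * expR (K * s)) = e \*: (expR \o (fun s : R => K * s)).
  by apply: funext => s.
have -> : K * (e * expR (K * t)) = e *: (expR (K * t) * K).
  by rewrite /= mulrC -mulrA.
exact: h3.
Qed.

Lemma proper_false (R : realType) (t : R) (P : R -> Prop) :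
  (\forall s \near t^'-, P s) -> (\forall s \near t^'-, ~ P s) -> False.
Proof.
move=> h1 h2.
have [s [a b]] := @filter_ex _ _ (at_left_proper_filter t) _ (filterI h1 h2).
exact: b a.
Qed.

Lemma near_to_left (R : realType) (t : R) (P : R -> Prop) :
  (\forall s \near t, P s) -> (\forall s \near t^'-, P s).
Proof. by move=> h; rewrite near_withinE; apply: filterS h => s ps _. Qed.

Lemma cont_left_ge (R : realType) (g : R -> R) t :
  {for t, continuous g} -> (\forall s \near t^'-, 0 < g s) -> 0 <= g t.
Proof.
move=> cg h; rewrite leNgt; apply/negP => gt.
have h2 : \forall s \near t, g s < 0 by exact: cvgr_lt _ cg _ gt.
apply: (proper_false h (near_to_left _)).
by apply: filterS h2 => s /[swap] /lt_trans /[apply]; rewrite ltxx.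
Qed.
Lemma C1_facts (R : realType) (f : R -> R) : C1_Rplus f ->
  [/\ (forall t : R, 0 < t -> is_derive t 1 f ((derive1 f) t)),
      (forall t : R, 0 < t -> {for t, continuous f}),
      (forall t : R, 0 < t -> {for t, continuous (derive1 f)}) &
      f @ (0:R)^'+ --> f 0].
Proof.
move=> [f' [hd [h0 hc]]].
have e : forall t, 0 < t -> (derive1 f) t = f' t.
  by move=> t t0; rewrite derive1E; have [_ ->] := hd t t0.
split.
- by move=> t t0; rewrite e //; exact: hd.
- move=> t t0; exact: is_derive_cont (hd t t0).
- move=> t t0.
  have ct := within_to_at hc t0.
  have en : \forall s \near t, f' s = (derive1 f) s.
    near=> s; rewrite e //; near: s; exact: lt_nbhsr t0.
  suff H : derive1 f @ t --> derive1 f t by [].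
  rewrite (e t t0); exact: (cvg_trans (near_eq_cvg en) ct).
- exact: right_cont0 h0.
Unshelve. all: by end_near. Qed.

Lemma within_at0 (R : realType) (g : R -> R) :
  {within [set x : R | 0 <= x], continuous g} -> g @ (0:R)^'+ --> g 0.
Proof.
move=> cg.
have := (subspace_continuousP _ _).1 cg 0 (lexx 0).
move=> H; apply: cvg_trans H.
by apply: cvg_app; apply: within_subset => x /= /ltW.
Qed.

Lemma core (R : realType) (alpha beta M e : R) (c : int -> R -> R)
  (zeta xi : R -> R) (W Q : int -> R -> R) :
  0 < alpha -> 0 < beta -> 0 < e ->
  {ae (@lebesgue_measure R), forall t : R, 0 <= t -> forall j : int, `|c j t| <= M} ->
  {within [set x : R | 0 <= x], continuous zeta} ->
  {within [set x : R | 0 <= x], continuous xi} ->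
  (forall j : int, C1_Rplus (W j)) ->
  (forall j : int, C1_Rplus (Q j)) ->
  (forall (t : R) (j : int), 0 < t -> zeta t <= j%:~R <= xi t ->
     derive1 (W j) t >= - (2 * alpha) * W j t + beta * (Q j t + Q (j + 1)%R t) /\
     derive1 (Q j) t >= c j t * Q j t + alpha * (W j t + W (j - 1)%R t)) ->
  (forall j : int, zeta 0 - 1 <= j%:~R <= xi 0 + 1 ->
     0 <= W j 0 /\ 0 <= Q j 0) ->
  (forall (t : R) (j : int), 0 < t ->
     (zeta t - 1 <= j%:~R < zeta t) || (xi t < j%:~R <= xi t + 1) ->
     0 <= W j t /\ 0 <= Q j t) ->
  forall (t : R) (j : int), 0 < t -> zeta t <= j%:~R <= xi t ->
     0 < W j t + e * expR ((`|M| + 2 * alpha + 2 * beta + 1) * t) /\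
     0 < Q j t + e * expR ((`|M| + 2 * alpha + 2 * beta + 1) * t).
Proof.
move=> a0 b0 e0 hM czeta cxi hW hQ hder h0 hbd.
set K := `|M| + 2 * alpha + 2 * beta + 1.
have K0 : 0 < K by rewrite /K; have := normr_ge0 M; lra.
pose p := fun s : R => e * expR (K * s).
have pp : forall s : R, 0 < p s by move=> s; rewrite /p mulr_gt0 // expR_gt0.
have pge : forall s : R, 0 <= s -> e <= p s.
  move=> s s0; rewrite /p ler_peMr ?(ltW e0) //.
  apply: le_trans (expR_ge1Dx _); rewrite lerDl mulr_ge0 // ltW //.
have pder : forall s : R, is_derive s 1 p (K * p s) by move=> s; exact: is_derive_p.
have hWf := fun j => C1_facts (hW j).
have hQf := fun j => C1_facts (hQ j).
pose reg := fun (s : R) (j : int) => zeta s <= j%:~R <= xi s.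
pose bnd := fun (s : R) (j : int) => (zeta s - 1 <= j%:~R < zeta s) || (xi s < j%:~R <= xi s + 1).
pose Pg := fun s => forall j, reg s j -> 0 < W j s + p s /\ 0 < Q j s + p s.
suff main : forall t, 0 < t -> Pg t by move=> t j t0 rj; exact: main t t0 j rj.
move=> t1 t10; apply: contrapT => nP1.
pose S := [set s | 0 < s /\ ~ Pg s].
have S1 : S t1 by [].
have lbS : lbound S 0 by move=> s [s0 _]; exact: ltW.
have hlb : has_lbound S by exists 0.
pose ts := inf S.
have F1 : forall s, S s -> ts <= s by move=> s Ss; exact: ge_inf hlb _ Ss.
have F2 : forall x, ts < x -> exists2 s, S s & s < x.
  by move=> x; apply: inf_lt; exists t1.
have F3 : 0 <= ts by apply: lb_le_inf => //; exists t1.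
have F4 : forall s, 0 < s -> s < ts -> Pg s.
  move=> s s0 sts; apply: contrapT => ns.
  by have := F1 s (conj s0 ns); rewrite leNgt sts.
have ts0 : 0 < ts.
  rewrite lt_neqAle F3 andbT; apply/eqP => ets.
  have Z1 : \forall s \near (0:R)^'+, zeta 0 - 1 < zeta s.
    by apply: (cvgr_gt _ (within_at0 czeta)); lra.
  have X1 : \forall s \near (0:R)^'+, xi s < xi 0 + 1.
    by apply: (cvgr_lt _ (within_at0 cxi)); lra.
  have J : \forall s \near (0:R)^'+, forall j : int,
      zeta 0 - 1 < j%:~R < xi 0 + 1 -> 0 < W j s + p s /\ 0 < Q j s + p s.
    apply: near_forall_int => j /andP[jl jr].
    have [hw0 hq0] : 0 <= W j 0 /\ 0 <= Q j 0.
      by apply: h0; rewrite (ltW jl) (ltW jr).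
    have [_ _ _ cW0] := hWf j.
    have [_ _ _ cQ0] := hQf j.
    have A1 : \forall s \near (0:R)^'+, W j 0 - e < W j s.
      by apply: (cvgr_gt _ cW0); lra.
    have A2 : \forall s \near (0:R)^'+, Q j 0 - e < Q j s.
      by apply: (cvgr_gt _ cQ0); lra.
    near=> s.
    have s0 : 0 < s by near: s; exact: nbhs_right_gt.
    have h1 : W j 0 - e < W j s by near: s.
    have h2 : Q j 0 - e < Q j s by near: s.
    have := pge s (ltW s0); move=> ?; split; lra.
  have G : \forall s \near (0:R)^'+, 0 < s /\ Pg s.
    near=> s; split; first by near: s; exact: nbhs_right_gt.
    have HJ : forall j : int, zeta 0 - 1 < j%:~R < xi 0 + 1 -> 0 < W j s + p s /\ 0 < Q j s + p s.
      by near: s.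
    move=> j /andP[zj jx]; apply: HJ; apply/andP; split.
    - have h1 : zeta 0 - 1 < zeta s by near: s.
      exact: lt_le_trans h1 zj.
    - have h1 : xi s < xi 0 + 1 by near: s.
      exact: le_lt_trans jx h1.
  move: G; rewrite near_withinE => /nbhs_ballP[d /= d0 Hd].
  have dts : ts < d by rewrite -ets.
  have [s [s0 ns] sd] := F2 d dts.
  apply: ns; have := Hd s; rewrite /ball /= sub0r normrN gtr0_norm //.
  by move=> /(_ sd) /(_ s0) [].
have cz : zeta @ ts --> zeta ts := within_to_at czeta ts0.
have cx : xi @ ts --> xi ts := within_to_at cxi ts0.
have NZ : \forall s \near ts, [/\ 0 < s, zeta s < zeta ts + 1, zeta ts - 1 < zeta s,
    xi s < xi ts + 1 & xi ts - 1 < xi s].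
  near=> s; split.
  - by near: s; exact: lt_nbhsr ts0.
  - by near: s; apply: (cvgr_lt _ cz); lra.
  - by near: s; apply: (cvgr_gt _ cz); lra.
  - by near: s; apply: (cvgr_lt _ cx); lra.
  - by near: s; apply: (cvgr_gt _ cx); lra.
have RB : forall j, reg ts j -> \forall s \near ts, 0 < s /\ (reg s j \/ bnd s j).
  move=> j /andP[zj jx]; near=> s.
  have [s0 z1 z2 x1 x2] : [/\ 0 < s, zeta s < zeta ts + 1, zeta ts - 1 < zeta s,
    xi s < xi ts + 1 & xi ts - 1 < xi s] by near: s.
  split => //; rewrite /reg /bnd.
  have [hz|hz] := leP (zeta s) j%:~R.
  - have [hx|hx] := leP j%:~R (xi s); first by left; apply/andP; split.
    right; apply/orP; right; apply/andP; split => //; lra.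
  - right; apply/orP; left; apply/andP; split => //; lra.
have PL : forall j, reg ts j ->
    \forall s \near ts^'-, 0 < W j s + p s /\ 0 < Q j s + p s.
  move=> j rj.
  have A := near_to_left (RB j rj).
  have B : \forall s \near ts^'-, s < ts := nbhs_left_lt ts.
  near=> s.
  have sts : s < ts by near: s.
  have [s0 [r|b]] : 0 < s /\ (reg s j \/ bnd s j) by near: s.
  - exact: F4 s s0 sts j r.
  - have [hw hq] := hbd s j s0 b; have := pp s; move=> ?; split; lra.
have dW : forall j, is_derive ts 1 (W j + p) (derive1 (W j) ts + K * p ts).
  by move=> j; have [d _ _ _] := hWf j; exact: is_deriveD (d ts ts0) (pder ts).
have dQ : forall j, is_derive ts 1 (Q j + p) (derive1 (Q j) ts + K * p ts).
  by move=> j; have [d _ _ _] := hQf j; exact: is_deriveD (d ts ts0) (pder ts).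
have F6 : forall j, reg ts j -> 0 <= W j ts + p ts /\ 0 <= Q j ts + p ts.
  move=> j rj; split.
  - apply: (cont_left_ge (is_derive_cont (dW j))).
    by apply: filterS (PL j rj) => s [].
  - apply: (cont_left_ge (is_derive_cont (dQ j))).
    by apply: filterS (PL j rj) => s [].
have F7 : forall k : int, zeta ts - 1 <= k%:~R <= xi ts + 1 ->
    0 <= W k ts + p ts /\ 0 <= Q k ts + p ts.
  move=> k /andP[kl kr].
  have [r|nr] := boolP (reg ts k); first exact: F6.
  have b : bnd ts k.
    move: nr; rewrite /reg /bnd negb_and -!ltNge => /orP[h|h].
    - by apply/orP; left; rewrite kl h.
    - by apply/orP; right; rewrite h kr.
  have [hw hq] := hbd ts k ts0 b; have := pp ts; move=> ?; split; lra.
have [j [jr nj]] : exists j : int, zeta ts - 1 < j%:~R < xi ts + 1 /\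
    ~ (\forall s \near ts, reg s j -> 0 < W j s + p s /\ 0 < Q j s + p s).
  apply: contrapT => hn.
  have All : \forall s \near ts, forall j : int, zeta ts - 1 < j%:~R < xi ts + 1 ->
      (reg s j -> 0 < W j s + p s /\ 0 < Q j s + p s).
    apply: (@near_forall_int R R (nbhs ts) _ (zeta ts - 1) (xi ts + 1) (fun j s => reg s j -> 0 < W j s + p s /\ 0 < Q j s + p s)) => j jr.
    by apply: contrapT => nj; apply: hn; exists j; split.
  have : \forall s \near ts, Pg s.
    near=> s.
    have [s0 z1 z2 x1 x2] : [/\ 0 < s, zeta s < zeta ts + 1, zeta ts - 1 < zeta s,
      xi s < xi ts + 1 & xi ts - 1 < xi s] by near: s.
    have HA : forall j : int, zeta ts - 1 < j%:~R < xi ts + 1 ->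
      (reg s j -> 0 < W j s + p s /\ 0 < Q j s + p s) by near: s.
    move=> j rsj; apply: HA => //.
    move: rsj => /andP[zj jx]; apply/andP; split; lra.
  move=> /nbhs_ballP[d /= d0 Hd].
  have tsd : ts < ts + d by lra.
  have [s [s0 ns] sd] := F2 _ tsd.
  have tss := F1 s (conj s0 ns).
  apply: ns; apply: Hd; rewrite /ball /= ler0_norm; last by lra.
  lra.
have rj : reg ts j.
  have [//|nr] := boolP (reg ts j); exfalso; apply: nj.
  move: nr; rewrite /reg negb_and -!ltNge => /orP[h|h].
  - have : \forall s \near ts, j%:~R < zeta s by apply: (cvgr_gt _ cz).
    move=> A; apply: filterS A => s h1 /andP[h2 _]; exfalso; lra.
  - have : \forall s \near ts, xi s < j%:~R by apply: (cvgr_lt _ cx).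
    move=> A; apply: filterS A => s h1 /andP[_ h2]; exfalso; lra.
have bad : W j ts + p ts <= 0 \/ Q j ts + p ts <= 0.
  apply: contrapT => hb; apply: nj.
  have hw : 0 < W j ts + p ts.
    by rewrite ltNge; apply/negP => h; apply: hb; left.
  have hq : 0 < Q j ts + p ts.
    by rewrite ltNge; apply/negP => h; apply: hb; right.
  have A1 : \forall s \near ts, 0 < (W j + p) s.
    exact: (cvgr_gt _ (is_derive_cont (dW j))).
  have A2 : \forall s \near ts, 0 < (Q j + p) s.
    exact: (cvgr_gt _ (is_derive_cont (dQ j))).
  by apply: filterS2 A1 A2 => s h1 h2 _; split.
have hK : K = `|M| + 2 * alpha + 2 * beta + 1 by [].
have p0 := pp ts.
have hMp : 0 <= `|M| * p ts by rewrite mulr_ge0 // ltW.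
have hap : 0 < alpha * p ts by rewrite mulr_gt0.
have hbp : 0 < beta * p ts by rewrite mulr_gt0.
have [hw0 hq0] := F6 j rj.
case: bad => [hw|hq].
- have eW : W j ts + p ts = 0 by apply/eqP; rewrite eq_le hw hw0.
  have hl : derive1 (W j) ts + K * p ts <= 0.
    apply: (left_deriv (dW j)).
    apply: filterS (PL j rj) => s [h _].
    have -> : (W j + p) ts = W j ts + p ts by [].
    have -> : (W j + p) s = W j s + p s by [].
    by rewrite eW.
  have [hdw _] := hder ts j ts0 rj.
  have [_ hq1] : 0 <= W (j + 1)%R ts + p ts /\ 0 <= Q (j + 1)%R ts + p ts.
    apply: F7; rewrite intrD; move: rj => /andP[? ?]; apply/andP; split; lra.
  have hb1 : 0 <= beta * (Q j ts + p ts) by rewrite mulr_ge0 // ltW.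
  have hb2 : 0 <= beta * (Q (j + 1)%R ts + p ts) by rewrite mulr_ge0 // ltW.
  have e1 : beta * (Q j ts + Q (j + 1)%R ts) =
    beta * (Q j ts + p ts) + beta * (Q (j + 1)%R ts + p ts) - 2 * (beta * p ts) by ring.
  have e2 : - (2 * alpha) * W j ts = 2 * (alpha * p ts).
    have -> : W j ts = - p ts by lra.
    ring.
  have e3 : K * p ts = `|M| * p ts + 2 * (alpha * p ts) + 2 * (beta * p ts) + p ts.
    rewrite hK; ring.
  lra.
- have eQ : Q j ts + p ts = 0 by apply/eqP; rewrite eq_le hq hq0.
  have hl : derive1 (Q j) ts + K * p ts <= 0.
    apply: (left_deriv (dQ j)).
    apply: filterS (PL j rj) => s [_ h].
    have -> : (Q j + p) ts = Q j ts + p ts by [].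
    have -> : (Q j + p) s = Q j s + p s by [].
    by rewrite eQ.
  have [hw1 _] : 0 <= W (j - 1)%R ts + p ts /\ 0 <= Q (j - 1)%R ts + p ts.
    apply: F7; rewrite intrB; move: rj => /andP[? ?]; apply/andP; split; lra.
  have [_ cQ cdQ _] := hQf j.
  have [_ cW _ _] := hWf j.
  have [_ cW1 _ _] := hWf (j - 1)%R.
  have G : - `|M| * p ts + alpha * (W j ts + W (j - 1)%R ts) <= derive1 (Q j) ts.
    rewrite leNgt; apply/negP => hG.
    pose phi := fun s => - `|M| * `|Q j s| + alpha * (W j s + W (j - 1)%R s) - derive1 (Q j) s.
    have cphi : phi @ ts --> phi ts.
      apply: cvgB; last exact: cdQ ts ts0.
      apply: cvgD.
        apply: cvgM; first exact: cvg_cst.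
        exact: cvg_norm (cQ ts ts0).
      apply: cvgM; first exact: cvg_cst.
      apply: cvgD; [exact: cW ts ts0 | exact: cW1 ts ts0].
    have phi0 : 0 < phi ts.
      rewrite /phi; have -> : Q j ts = - p ts by lra.
      rewrite normrN (gtr0_norm p0); lra.
    have A1 : \forall s \near ts, 0 < phi s by exact: (cvgr_gt _ cphi _ phi0).
    have Qn : Q j ts < 0 by lra.
    have A2 : \forall s \near ts, Q j s < 0 by exact: (cvgr_lt _ (cQ ts ts0) _ Qn).
    apply: (@ae_dense R (fun t => 0 <= t -> forall k : int, `|c k t| <= M) ts hM).
    have RBj := RB j rj.
    near=> s => gs.
    have h1 : 0 < phi s by near: s.
    have h2 : Q j s < 0 by near: s.
    have [s0 [r|b]] : 0 < s /\ (reg s j \/ bnd s j) by near: s.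
    + have [_ hq'] := hder s j s0 r.
      have hc := gs (ltW s0) j.
      have : `|c j s * Q j s| <= `|M| * `|Q j s|.
        rewrite normrM ler_wpM2r //; exact: le_trans hc (ler_norm _).
      rewrite ler_norml => /andP[h3 _].
      rewrite /phi in h1; lra.
    + have [_ hq''] := hbd s j s0 b; lra.
  have e1 : alpha * (W j ts + W (j - 1)%R ts) =
    alpha * (W j ts + p ts) + alpha * (W (j - 1)%R ts + p ts) - 2 * (alpha * p ts) by ring.
  have ha1 : 0 <= alpha * (W j ts + p ts) by rewrite mulr_ge0 // ltW.
  have ha2 : 0 <= alpha * (W (j - 1)%R ts + p ts) by rewrite mulr_ge0 // ltW.
  have e3 : K * p ts = `|M| * p ts + 2 * (alpha * p ts) + 2 * (beta * p ts) + p ts.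
    rewrite hK; ring.
  have e4 : - `|M| * p ts = - (`|M| * p ts) by ring.
  lra.
Unshelve. all: by end_near. Qed.

Lemma lim_eps (R : realType) (x E : R) : 0 < E ->
  (forall e, 0 < e -> 0 < x + e * E) -> 0 <= x.
Proof.
move=> E0 H; rewrite leNgt; apply/negP => x0.
have e0 : 0 < - x / (2 * E) by rewrite divr_gt0 //; lra.
have := H _ e0.
have -> : - x / (2 * E) * E = - x / 2 by field; rewrite gt_eqF.
lra.
Qed.

Unset Implicit Arguments.
Set Strict Implicit.
Set Printing Implicit Defensive.

Theorem propositionB6 (R : realType) (alpha beta : R)
  (c : int -> R -> R) (zeta xi : R -> R) (W Q : int -> R -> R) :
  0 < alpha -> 0 < beta ->
  Linf_linf c ->
  {within [set x : R | 0 <= x], continuous zeta} ->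
  {within [set x : R | 0 <= x], continuous xi} ->
  (forall j : int, C1_Rplus (W j)) ->
  (forall j : int, C1_Rplus (Q j)) ->
  (forall (t : R) (j : int), 0 < t -> zeta t <= j%:~R <= xi t ->
     derive1 (W j) t >= - (2 * alpha) * W j t + beta * (Q j t + Q (j + 1)%R t) /\
     derive1 (Q j) t >= c j t * Q j t + alpha * (W j t + W (j - 1)%R t)) ->
  (forall j : int, zeta 0 - 1 <= j%:~R <= xi 0 + 1 ->
     0 <= W j 0 /\ 0 <= Q j 0) ->
  (forall (t : R) (j : int), 0 < t ->
     (zeta t - 1 <= j%:~R < zeta t) || (xi t < j%:~R <= xi t + 1) ->
     0 <= W j t /\ 0 <= Q j t) ->
  forall (t : R) (j : int), 0 < t -> zeta t <= j%:~R <= xi t ->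
     0 <= W j t /\ 0 <= Q j t.
Proof.
move=> a0 b0 [_ [M hM]] cz cx hW hQ hder h0 hbd t j t0 rj.
split; apply: (lim_eps (expR_gt0 ((`|M| + 2 * alpha + 2 * beta + 1) * t))) => e e0;
  have [h1 h2] := core a0 b0 e0 hM cz cx hW hQ hder h0 hbd t0 rj => //.
Qed.
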